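(* Fix $n\ge1$ and let $\kappa_n=1+4\pi^2n^2D$. If $\kappa_n\neq3/2$, then a pitchfork bifurcation occurs at $(\kappa_n,\kappa_n)$, and its type is determined by the sign of $\alpha_n''(0)$: it is subcritical if $\alpha_n''(0)<0$, i.e. $\kappa_n<3/2$ (equivalently $0<D<(8n^2\pi^2)^{-1}$), and supercritical if $\alpha_n''(0)>0$, i.e. $\kappa_n>3/2$ (equivalently $D>(8n^2\pi^2)^{-1}$).
   Context: $\mathbb{T}=[0,1]$ with endpoints identified; $D>0$; stationary problem $0=DU_{xx}-U+\kappa e^U/\int_0^1e^Udy$, periodic, with trivial branch $U\equiv\kappa$. Near $(\kappa_n,\kappa_n)$ the nonconstant solutions form a smooth branch $\Gamma_n(s)=(\kappa_n+\alpha_n(s)+s\sqrt2\cos(2n\pi x)+sz_n(s),\ \kappa_n+\alpha_n(s))$, $|s|<\delta$, with $\alpha_n$ smooth, $\alpha_n(0)=\alpha_n'(0)=0$ and $z_n(0)=0$. The bifurcation is a pitchfork if $\alpha_n''(0)\ne0$; it is subcritical if $\kappa_n+\alpha_n(s)<\kappa_n$ for small $s\neq0$ (branch on the side where the trivial solution is stable) and supercritical if $\kappa_n+\alpha_n(s)>\kappa_n$ for small $s\ne0$. *)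

(* Defs.v *)
From Stdlib Require Import Reals Lra.
From Coquelicot Require Import Coquelicot.
Open Scope R_scope.

Definition kappa (D : R) (n : nat) : R := 1 + 4 * PI ^ 2 * (INR n) ^ 2 * D.

Definition smooth_on1 (delta : R) (a : R -> R) : Prop :=
  forall (k : nat) (s : R), Rabs s < delta -> ex_derive_n a k s.

Definition partial_sx (f : R -> R -> R) (m k : nat) (s x : R) : R :=
  Derive_n (fun s' => Derive_n (f s') k x) m s.

Definition smooth_on2 (delta : R) (f : R -> R -> R) : Prop :=
  forall (m k : nat) (s x : R), Rabs s < delta ->
    ex_derive_n (f s) k x /\
    ex_derive_n (fun s' => Derive_n (f s') k x) m s /\
    continuous (fun p : R * R => partial_sx f m k (fst p) (snd p)) (s, x).

Definition Gamma_U (D : R) (n : nat) (a : R -> R) (z : R -> R -> R) (s : R)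
  : R -> R :=
  fun x => kappa D n + a s + s * sqrt 2 * cos (2 * INR n * PI * x) + s * z s x.

Definition stationary_solution (D k : R) (U : R -> R) : Prop :=
  (forall x, U (x + 1) = U x) /\
  (forall x, ex_derive_n U 2 x) /\
  (forall x, D * Derive_n U 2 x - U x
             + k * exp (U x) / RInt (fun y => exp (U y)) 0 1 = 0).

(* (alpha_n, z_n) parametrize a smooth branch of nonconstant solutions
   Gamma_n(s) = (kappa_n + alpha_n(s) + s sqrt2 cos(2 n pi x) + s z_n(s),
                 kappa_n + alpha_n(s)),  |s| < delta. *)
Definition is_branch (D : R) (n : nat) (delta : R)
    (a : R -> R) (z : R -> R -> R) : Prop :=
  0 < delta /\
  smooth_on1 delta a /\ a 0 = 0 /\ Derive a 0 = 0 /\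
  smooth_on2 delta z /\ (forall x, z 0 x = 0) /\
  (forall s x, Rabs s < delta -> z s (x + 1) = z s x) /\
  (forall s, Rabs s < delta ->
     stationary_solution D (kappa D n + a s) (Gamma_U D n a z s)).

Definition subcritical (a : R -> R) : Prop :=
  exists eps, 0 < eps /\ forall s, 0 < Rabs s < eps -> a s < 0.
Definition supercritical (a : R -> R) : Prop :=
  exists eps, 0 < eps /\ forall s, 0 < Rabs s < eps -> a s > 0.
Definition pitchfork (a : R -> R) : Prop := Derive_n a 2 0 <> 0.

(* Main.v *)
Require Import Defs.
From Stdlib Require Import Reals Lra.
From Coquelicot Require Import Coquelicot.
Open Scope R_scope.


Lemma isd_eq (f : R -> R) (x a b : R) : is_derive f x a -> @eq R a b -> is_derive f x b.
Proof. intros H ->; exact H. Qed.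
Lemma isd_plus (f g : R -> R) x a b :
  is_derive f x a -> is_derive g x b -> is_derive (fun y => f y + g y) x (a + b).
Proof. intros Ha Hb; exact (is_derive_plus f g x a b Ha Hb). Qed.
Lemma isd_mult (f g : R -> R) x a b :
  is_derive f x a -> is_derive g x b ->
  is_derive (fun y => f y * g y) x (a * g x + f x * b).
Proof. intros Ha Hb; exact (is_derive_mult f g x a b Ha Hb Rmult_comm). Qed.
Lemma isd_const (c x : R) : is_derive (fun _ => c) x 0.
Proof. exact (is_derive_const (K:=R_AbsRing) c x). Qed.
Lemma isd_id (x : R) : is_derive (fun y => y) x 1.
Proof. exact (is_derive_id (K:=R_AbsRing) x). Qed.
Lemma isd_exp (f : R -> R) x a :
  is_derive f x a -> is_derive (fun y => exp (f y)) x (exp (f x) * a).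
Proof. intros H. apply (isd_eq _ _ (scal a (exp (f x)))).
  apply (is_derive_comp exp f x). apply is_derive_exp. exact H.
  unfold scal; simpl; unfold mult; simpl. ring. Qed.
Lemma isd_cos (f : R -> R) x a :
  is_derive f x a -> is_derive (fun y => cos (f y)) x (- sin (f x) * a).
Proof. intros H. apply (isd_eq _ _ (scal a (- sin (f x)))).
  apply (is_derive_comp cos f x). apply is_derive_cos. exact H.
  unfold scal; simpl; unfold mult; simpl. ring. Qed.
Lemma isd_sin (f : R -> R) x a :
  is_derive f x a -> is_derive (fun y => sin (f y)) x (cos (f x) * a).
Proof. intros H. apply (isd_eq _ _ (scal a (cos (f x)))).
  apply (is_derive_comp sin f x). apply is_derive_sin. exact H.
  unfold scal; simpl; unfold mult; simpl. ring. Qed.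

Lemma c2_cont_x (h : R -> R -> R) s x :
  continuity_2d_pt h s x -> continuous (h s) x.
Proof.
  intros H. apply continuity_2d_pt_filterlim in H.
  apply (continuous_comp_2 (fun _ : R => s) (fun v : R => v) h x).
  apply continuous_const. apply continuous_id. exact H.
Qed.

Lemma ball_abs (s0 e y : R) : ball s0 e y -> Rabs (y - s0) < e.
Proof. intros H. exact H. Qed.

Lemma deriv_int (h h' : R -> R -> R) (del s0 : R) :
  Rabs s0 < del ->
  (forall s x, Rabs s < del -> is_derive (fun u => h u x) s (h' s x)) ->
  (forall s x, Rabs s < del -> continuity_2d_pt h s x) ->
  (forall s x, Rabs s < del -> continuity_2d_pt h' s x) ->
  is_derive (fun s => RInt (h s) 0 1) s0 (RInt (h' s0) 0 1).
Proof.
  intros Hs0 Hd Hc Hc'.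
  assert (Hp : 0 < del - Rabs s0) by lra.
  set (ep := mkposreal _ Hp).
  assert (Hloc : forall y, Rabs (y - s0) < ep -> Rabs y < del).
  { intros y Hy. simpl in Hy. pose proof (Rabs_triang_inv y s0). lra. }
  assert (H := is_derive_RInt_param h 0 1 s0).
  replace (RInt (h' s0) 0 1) with (RInt (fun t => Derive (fun u => h u t) s0) 0 1).
  apply H.
  - exists ep. intros y Hy t _. eexists. apply Hd. apply Hloc. apply ball_abs. exact Hy.
  - intros t _. apply continuity_2d_pt_ext_loc with (f := h').
    exists ep. intros u v Hu _. symmetry. apply is_derive_unique. apply Hd. apply Hloc; exact Hu.
    apply Hc'. exact Hs0.
  - exists ep. intros y Hy. apply (ex_RInt_continuous (V:=R_CompleteNormedModule)). intros z _.
    apply c2_cont_x. apply Hc. apply Hloc. apply ball_abs. exact Hy.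
  - apply RInt_ext. intros x _. apply is_derive_unique. apply Hd. exact Hs0.
Qed.


Lemma cpt_of_der (f : R -> R) x : ex_derive f x -> continuity_pt f x.
Proof. intros H. apply continuity_pt_filterlim. apply (ex_derive_continuous f x H). Qed.

Lemma c2_s (f : R -> R) s x : continuity_pt f s -> continuity_2d_pt (fun u v => f u) s x.
Proof. intros H. apply (continuity_1d_2d_pt_comp f (fun u v => u)). exact H.
  apply continuity_2d_pt_id1. Qed.
Lemma c2_x (f : R -> R) s x : continuity_pt f x -> continuity_2d_pt (fun u v => f v) s x.
Proof. intros H. apply (continuity_1d_2d_pt_comp f (fun u v => v)). exact H.
  apply continuity_2d_pt_id2. Qed.
Lemma c2_exp (f : R -> R -> R) s x : continuity_2d_pt f s x ->
  continuity_2d_pt (fun u v => exp (f u v)) s x.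
Proof. intros H. apply (continuity_1d_2d_pt_comp exp f). apply cpt_of_der. eexists. apply is_derive_exp. exact H. Qed.

Definition cc (n : nat) := 2 * INR n * PI.
Definition phi (n : nat) (x : R) := sqrt 2 * cos (cc n * x).
Definition Da (alpha : R -> R) k s := Derive_n alpha k s.
Definition Dz (z : R -> R -> R) k s x := Derive_n (fun u => z u x) k s.
Definition U0 D n alpha z s x := Gamma_U D n alpha z s x.
Definition U1 n alpha z s x := Da alpha 1 s + phi n x + z s x + s * Dz z 1 s x.
Definition U2 (alpha : R -> R) z s x := Da alpha 2 s + 2 * Dz z 1 s x + s * Dz z 2 s x.
Definition U3 (alpha : R -> R) z s x := Da alpha 3 s + 3 * Dz z 2 s x + s * Dz z 3 s x.

Lemma Da_der delta alpha k s : smooth_on1 delta alpha -> Rabs s < delta ->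
  is_derive (Da alpha k) s (Da alpha (S k) s).
Proof. intros H Hs. unfold Da. apply Derive_correct. exact (H (S k) s Hs). Qed.
Lemma Da_cont delta alpha k s : smooth_on1 delta alpha -> Rabs s < delta ->
  continuity_pt (Da alpha k) s.
Proof. intros H Hs. apply cpt_of_der. eexists. apply (Da_der delta alpha k s H Hs). Qed.
Lemma Dz_der delta z k s x : smooth_on2 delta z -> Rabs s < delta ->
  is_derive (fun u => Dz z k u x) s (Dz z (S k) s x).
Proof. intros H Hs. unfold Dz. apply Derive_correct.
  destruct (H (S k) 0%nat s x Hs) as [_ [H2 _]]. exact H2. Qed.
Lemma Dz_cont delta z k s x : smooth_on2 delta z -> Rabs s < delta ->
  continuity_2d_pt (Dz z k) s x.
Proof. intros H Hs. destruct (H k 0%nat s x Hs) as [_ [_ H3]].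
  apply continuity_2d_pt_filterlim. exact H3. Qed.

Lemma phi_der n x : is_derive (phi n) x (- sqrt 2 * cc n * sin (cc n * x)).
Proof. unfold phi. eapply isd_eq. apply isd_mult. apply isd_const.
  apply isd_cos. apply isd_mult. apply isd_const. apply isd_id. cbv beta. cbv beta; ring. Qed.
Lemma phi_cont n x : continuity_pt (phi n) x.
Proof. apply cpt_of_der. eexists. apply phi_der. Qed.

Section X. End X.
Lemma U0_der D n alpha z delta s x : smooth_on1 delta alpha -> smooth_on2 delta z -> Rabs s < delta ->
  is_derive (fun u => U0 D n alpha z u x) s (U1 n alpha z s x).
Proof. intros Ha Hz Hs. unfold U0, Gamma_U, U1.
  eapply isd_eq. apply isd_plus. apply isd_plus. apply isd_plus. apply isd_const.
  apply (Da_der delta alpha 0 s Ha Hs).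
  apply isd_mult. apply isd_mult. apply isd_id. apply isd_const. apply isd_const.
  apply isd_mult. apply isd_id. apply (Dz_der delta z 0 s x Hz Hs).
  unfold phi, cc, Dz, Da. simpl. cbv beta; ring. Qed.
Lemma U1_der n alpha z delta s x : smooth_on1 delta alpha -> smooth_on2 delta z -> Rabs s < delta ->
  is_derive (fun u => U1 n alpha z u x) s (U2 alpha z s x).
Proof. intros Ha Hz Hs. unfold U1, U2.
  eapply isd_eq. apply isd_plus. apply isd_plus. apply isd_plus.
  apply (Da_der delta alpha 1 s Ha Hs). apply isd_const.
  apply (Dz_der delta z 0 s x Hz Hs).
  apply isd_mult. apply isd_id. apply (Dz_der delta z 1 s x Hz Hs).
  unfold Dz at 1. simpl. unfold Dz. simpl. cbv beta; ring. Qed.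
Lemma U2_der (alpha : R -> R) z delta s x : smooth_on1 delta alpha -> smooth_on2 delta z -> Rabs s < delta ->
  is_derive (fun u => U2 alpha z u x) s (U3 alpha z s x).
Proof. intros Ha Hz Hs. unfold U2, U3.
  eapply isd_eq. apply isd_plus. apply isd_plus.
  apply (Da_der delta alpha 2 s Ha Hs).
  apply isd_mult. apply isd_const. apply (Dz_der delta z 1 s x Hz Hs).
  apply isd_mult. apply isd_id. apply (Dz_der delta z 2 s x Hz Hs).
  cbv beta; ring. Qed.

Lemma U0_cont D n alpha z delta s x : smooth_on1 delta alpha -> smooth_on2 delta z -> Rabs s < delta ->
  continuity_2d_pt (U0 D n alpha z) s x.
Proof. intros Ha Hz Hs. unfold U0, Gamma_U. generalize (kappa D n) as k; intros k.
  repeat apply continuity_2d_pt_plus.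
  apply continuity_2d_pt_const.
  apply c2_s. pose proof (Da_cont delta alpha 0 s Ha Hs) as HH; exact HH.
  apply continuity_2d_pt_mult. apply continuity_2d_pt_mult. apply continuity_2d_pt_id1.
  apply continuity_2d_pt_const.
  apply (c2_x (fun v => cos (2 * INR n * PI * v))). apply cpt_of_der. eexists.
  apply isd_cos. apply isd_mult. apply isd_const. apply isd_id.
  apply continuity_2d_pt_mult. apply continuity_2d_pt_id1.
  pose proof (Dz_cont delta z 0 s x Hz Hs) as HH; exact HH. Qed.
Lemma U1_cont n alpha z delta s x : smooth_on1 delta alpha -> smooth_on2 delta z -> Rabs s < delta ->
  continuity_2d_pt (U1 n alpha z) s x.
Proof. intros Ha Hz Hs. unfold U1.
  repeat apply continuity_2d_pt_plus.
  apply c2_s. apply (Da_cont delta alpha 1 s Ha Hs).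
  apply c2_x. apply phi_cont.
  pose proof (Dz_cont delta z 0 s x Hz Hs) as HH; exact HH.
  apply continuity_2d_pt_mult. apply continuity_2d_pt_id1.
  apply (Dz_cont delta z 1 s x Hz Hs). Qed.
Lemma U2_cont (alpha : R -> R) z delta s x : smooth_on1 delta alpha -> smooth_on2 delta z -> Rabs s < delta ->
  continuity_2d_pt (U2 alpha z) s x.
Proof. intros Ha Hz Hs. unfold U2.
  repeat apply continuity_2d_pt_plus.
  apply c2_s. apply (Da_cont delta alpha 2 s Ha Hs).
  apply continuity_2d_pt_mult. apply continuity_2d_pt_const.
  apply (Dz_cont delta z 1 s x Hz Hs).
  apply continuity_2d_pt_mult. apply continuity_2d_pt_id1.
  apply (Dz_cont delta z 2 s x Hz Hs). Qed.
Lemma U3_cont (alpha : R -> R) z delta s x : smooth_on1 delta alpha -> smooth_on2 delta z -> Rabs s < delta ->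
  continuity_2d_pt (U3 alpha z) s x.
Proof. intros Ha Hz Hs. unfold U3.
  repeat apply continuity_2d_pt_plus.
  apply c2_s. apply (Da_cont delta alpha 3 s Ha Hs).
  apply continuity_2d_pt_mult. apply continuity_2d_pt_const.
  apply (Dz_cont delta z 2 s x Hz Hs).
  apply continuity_2d_pt_mult. apply continuity_2d_pt_id1.
  apply (Dz_cont delta z 3 s x Hz Hs). Qed.


Section S. End S.
Definition EE0 D n alpha z (w : R -> R) s : R :=
  RInt (fun x => w x * exp (U0 D n alpha z s x)) 0 1.
Definition EE1 D n alpha z (w : R -> R) s : R :=
  RInt (fun x => w x * (exp (U0 D n alpha z s x) * U1 n alpha z s x)) 0 1.
Definition EE2 D n alpha z (w : R -> R) s : R :=
  RInt (fun x => w x * (exp (U0 D n alpha z s x) *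
     (U1 n alpha z s x * U1 n alpha z s x + U2 alpha z s x))) 0 1.
Definition EE3 D n alpha z (w : R -> R) s : R :=
  RInt (fun x => w x * (exp (U0 D n alpha z s x) *
     (U1 n alpha z s x * (U1 n alpha z s x * U1 n alpha z s x + U2 alpha z s x)
      + (2 * U1 n alpha z s x * U2 alpha z s x + U3 alpha z s x)))) 0 1.
Definition LL0 D n alpha z (w : R -> R) s : R := RInt (fun x => w x * U0 D n alpha z s x) 0 1.
Definition LL1 n alpha z (w : R -> R) s : R := RInt (fun x => w x * U1 n alpha z s x) 0 1.
Definition LL2 alpha z (w : R -> R) s : R := RInt (fun x => w x * U2 alpha z s x) 0 1.
Definition LL3 alpha z (w : R -> R) s : R := RInt (fun x => w x * U3 alpha z s x) 0 1.

Ltac c2 Ha Hz Hs :=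
  repeat first
  [ apply (U0_cont _ _ _ _ _ _ _ Ha Hz Hs)
  | apply (U1_cont _ _ _ _ _ _ Ha Hz Hs)
  | apply (U2_cont _ _ _ _ _ Ha Hz Hs)
  | apply (U3_cont _ _ _ _ _ Ha Hz Hs)
  | apply c2_x; solve [auto]
  | apply continuity_2d_pt_const
  | apply c2_exp
  | apply continuity_2d_pt_mult
  | apply continuity_2d_pt_plus ].

Lemma EE0_der D n alpha z delta w s : smooth_on1 delta alpha -> smooth_on2 delta z ->
  (forall x, continuity_pt w x) -> Rabs s < delta ->
  is_derive (EE0 D n alpha z w) s (EE1 D n alpha z w s).
Proof. intros Ha Hz Hw Hs. unfold EE0, EE1.
  apply (deriv_int (fun s x => w x * exp (U0 D n alpha z s x))
    (fun s x => w x * (exp (U0 D n alpha z s x) * U1 n alpha z s x)) delta s Hs).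
  - intros s1 x1 Hu. eapply isd_eq. apply isd_mult. apply isd_const. apply isd_exp.
    apply (U0_der D n alpha z delta s1 x1 Ha Hz Hu). cbv beta; ring.
  - intros s1 x1 Hu. c2 Ha Hz Hu.
  - intros s1 x1 Hu. c2 Ha Hz Hu.
Qed.
Lemma EE1_der D n alpha z delta w s : smooth_on1 delta alpha -> smooth_on2 delta z ->
  (forall x, continuity_pt w x) -> Rabs s < delta ->
  is_derive (EE1 D n alpha z w) s (EE2 D n alpha z w s).
Proof. intros Ha Hz Hw Hs. unfold EE1, EE2.
  apply (deriv_int (fun s x => w x * (exp (U0 D n alpha z s x) * U1 n alpha z s x))
    (fun s x => w x * (exp (U0 D n alpha z s x) *
     (U1 n alpha z s x * U1 n alpha z s x + U2 alpha z s x))) delta s Hs).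
  - intros s1 x1 Hu. eapply isd_eq. apply isd_mult. apply isd_const. apply isd_mult. apply isd_exp.
    apply (U0_der D n alpha z delta s1 x1 Ha Hz Hu).
    apply (U1_der n alpha z delta s1 x1 Ha Hz Hu). cbv beta; ring.
  - intros s1 x1 Hu. c2 Ha Hz Hu.
  - intros s1 x1 Hu. c2 Ha Hz Hu.
Qed.
Lemma EE2_der D n alpha z delta w s : smooth_on1 delta alpha -> smooth_on2 delta z ->
  (forall x, continuity_pt w x) -> Rabs s < delta ->
  is_derive (EE2 D n alpha z w) s (EE3 D n alpha z w s).
Proof. intros Ha Hz Hw Hs. unfold EE2, EE3.
  apply (deriv_int (fun s x => w x * (exp (U0 D n alpha z s x) *
     (U1 n alpha z s x * U1 n alpha z s x + U2 alpha z s x)))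
    (fun s x => w x * (exp (U0 D n alpha z s x) *
     (U1 n alpha z s x * (U1 n alpha z s x * U1 n alpha z s x + U2 alpha z s x)
      + (2 * U1 n alpha z s x * U2 alpha z s x + U3 alpha z s x)))) delta s Hs).
  - intros s1 x1 Hu. eapply isd_eq. apply isd_mult. apply isd_const. apply isd_mult. apply isd_exp.
    apply (U0_der D n alpha z delta s1 x1 Ha Hz Hu).
    apply isd_plus. apply isd_mult.
    apply (U1_der n alpha z delta s1 x1 Ha Hz Hu). apply (U1_der n alpha z delta s1 x1 Ha Hz Hu).
    apply (U2_der alpha z delta s1 x1 Ha Hz Hu). cbv beta; ring.
  - intros s1 x1 Hu. c2 Ha Hz Hu.
  - intros s1 x1 Hu. c2 Ha Hz Hu.
Qed.
Lemma LL0_der D n alpha z delta w s : smooth_on1 delta alpha -> smooth_on2 delta z ->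
  (forall x, continuity_pt w x) -> Rabs s < delta ->
  is_derive (LL0 D n alpha z w) s (LL1 n alpha z w s).
Proof. intros Ha Hz Hw Hs. unfold LL0, LL1.
  apply (deriv_int (fun s x => w x * U0 D n alpha z s x)
    (fun s x => w x * U1 n alpha z s x) delta s Hs).
  - intros s1 x1 Hu. eapply isd_eq. apply isd_mult. apply isd_const.
    apply (U0_der D n alpha z delta s1 x1 Ha Hz Hu). cbv beta; ring.
  - intros s1 x1 Hu. c2 Ha Hz Hu.
  - intros s1 x1 Hu. c2 Ha Hz Hu.
Qed.
Lemma LL1_der n alpha z delta w s : smooth_on1 delta alpha -> smooth_on2 delta z ->
  (forall x, continuity_pt w x) -> Rabs s < delta ->
  is_derive (LL1 n alpha z w) s (LL2 alpha z w s).
Proof. intros Ha Hz Hw Hs. unfold LL1, LL2.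
  apply (deriv_int (fun s x => w x * U1 n alpha z s x)
    (fun s x => w x * U2 alpha z s x) delta s Hs).
  - intros s1 x1 Hu. eapply isd_eq. apply isd_mult. apply isd_const.
    apply (U1_der n alpha z delta s1 x1 Ha Hz Hu). cbv beta; ring.
  - intros s1 x1 Hu. c2 Ha Hz Hu.
  - intros s1 x1 Hu. c2 Ha Hz Hu.
Qed.
Lemma LL2_der alpha z delta w s : smooth_on1 delta alpha -> smooth_on2 delta z ->
  (forall x, continuity_pt w x) -> Rabs s < delta ->
  is_derive (LL2 alpha z w) s (LL3 alpha z w s).
Proof. intros Ha Hz Hw Hs. unfold LL2, LL3.
  apply (deriv_int (fun s x => w x * U2 alpha z s x)
    (fun s x => w x * U3 alpha z s x) delta s Hs).
  - intros s1 x1 Hu. eapply isd_eq. apply isd_mult. apply isd_const.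
    apply (U2_der alpha z delta s1 x1 Ha Hz Hu). cbv beta; ring.
  - intros s1 x1 Hu. c2 Ha Hz Hu.
  - intros s1 x1 Hu. c2 Ha Hz Hu.
Qed.


Lemma iR_lin (f g : R -> R) a b Lf Lg c1 c2 : is_RInt f a b Lf -> is_RInt g a b Lg ->
  is_RInt (fun x => c1 * f x + c2 * g x) a b (c1 * Lf + c2 * Lg).
Proof. intros Hf Hg.
  exact (is_RInt_plus (V:=R_NormedModule) (fun x => c1 * f x) (fun x => c2 * g x) a b _ _
    (is_RInt_scal (V:=R_NormedModule) f a b c1 Lf Hf) (is_RInt_scal (V:=R_NormedModule) g a b c2 Lg Hg)). Qed.
Lemma iR_ext (f g : R -> R) a b L : (forall x, f x = g x) -> is_RInt f a b L -> is_RInt g a b L.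
Proof. intros H H2. apply (is_RInt_ext (V:=R_NormedModule) f). intros; auto. exact H2. Qed.
Lemma iR_val (f : R -> R) (a b L L2 : R) : is_RInt f a b L -> @eq R L L2 -> is_RInt f a b L2.
Proof. intros H ->; exact H. Qed.
Lemma RInt_extR (f g : R -> R) (a b : R) : (forall x, @eq R (f x) (g x)) -> @eq R (RInt f a b) (RInt g a b).
Proof. intros H. apply RInt_ext. intros; apply H. Qed.
Lemma cpt_lin (f g : R -> R) c1 c2 x : continuity_pt f x -> continuity_pt g x ->
  continuity_pt (fun y => c1 * f y + c2 * g y) x.
Proof. intros Hf Hg. exact (continuity_pt_plus _ _ x (continuity_pt_scal f c1 x Hf) (continuity_pt_scal g c2 x Hg)). Qed.
Lemma cpt_mul (f g : R -> R) x : continuity_pt f x -> continuity_pt g x ->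
  continuity_pt (fun y => f y * g y) x.
Proof. intros Hf Hg. exact (continuity_pt_mult _ _ x Hf Hg). Qed.
Lemma cpt_exp (f : R -> R) x : continuity_pt f x -> continuity_pt (fun y => exp (f y)) x.
Proof. intros Hf. apply (continuity_pt_comp f exp x Hf). apply cpt_of_der. eexists. apply is_derive_exp. Qed.
Lemma cont_of_cpt (f : R -> R) x : continuity_pt f x -> continuous f x.
Proof. intros H. apply continuity_pt_filterlim. exact H. Qed.

Lemma RInt_is (f : R -> R) a b : (forall x, continuity_pt f x) -> is_RInt f a b (RInt f a b).
Proof. intros H. apply (RInt_correct (V:=R_CompleteNormedModule)).
  apply (ex_RInt_continuous (V:=R_CompleteNormedModule)). intros; apply cont_of_cpt; auto. Qed.

Lemma ident (w w1 : R -> R) (mu : R) D n alpha z delta s :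
  0 < D -> smooth_on2 delta z -> Rabs s < delta ->
  stationary_solution D (kappa D n + alpha s) (Gamma_U D n alpha z s) ->
  (forall x, is_derive w x (w1 x)) -> (forall x, is_derive w1 x (- mu * w x)) ->
  w 1 = w 0 -> w1 1 = w1 0 ->
  (1 + D * mu) * LL0 D n alpha z w s * EE0 D n alpha z (fun _ => 1) s
  = (kappa D n + alpha s) * EE0 D n alpha z w s.
Proof.
  intros HD Hz Hs [Hper [Hd2 Heq]] Hw Hw1 Hw0 Hw10.
  set (U := Gamma_U D n alpha z s) in *.
  set (K := kappa D n + alpha s) in *.
  assert (HdU : forall x, is_derive U x (Derive U x)).
  { intros x. apply Derive_correct. unfold U, Gamma_U. 
    destruct (Hz 0%nat 1%nat s x Hs) as [H1 _]. destruct H1 as [l Hl].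
    eexists. apply isd_plus. apply isd_plus. apply isd_plus. apply isd_const. apply isd_const.
    apply isd_mult. apply isd_const. apply isd_cos. apply isd_mult. apply isd_const. apply isd_id.
    apply isd_mult. apply isd_const. exact Hl. }
  assert (HcU : forall x, continuity_pt U x).
  { intros x. apply cpt_of_der. eexists. apply HdU. }
  assert (Hcw : forall x, continuity_pt w x).
  { intros x. apply cpt_of_der. eexists. apply Hw. }
  set (I := RInt (fun y => exp (U y)) 0 1) in *.
  assert (HI : 0 < I).
  { unfold I. apply RInt_gt_0. lra. intros; apply exp_pos.
    intros; apply cont_of_cpt. apply cpt_exp. apply HcU. }
  assert (HdU' : forall x, is_derive (Derive U) x ((U x - K * exp (U x) / I) / D)).
  { intros x. eapply isd_eq. apply Derive_correct. apply (Hd2 x).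
    simpl. specialize (Heq x). simpl in Heq. change (Derive (Derive U) x) with (Derive (fun x => Derive (fun x0 => U x0) x) x). set (d := Derive (fun x => Derive (fun x0 => U x0) x) x) in *. replace ((U x - K * exp (U x) / I) / D) with ((D * d) / D) by (f_equal; lra). field. lra. }
  set (g := fun x => (1 / D + mu) * (w x * U x) + (- (K / (I * D))) * (w x * exp (U x))).
  assert (Hg : is_RInt g 0 1 ((w 1 * Derive U 1 + (-1) * (w1 1 * U 1)) - (w 0 * Derive U 0 + (-1) * (w1 0 * U 0)))).
  { apply (is_RInt_derive (V:=R_CompleteNormedModule) (fun x => w x * Derive U x + (-1) * (w1 x * U x)) g).
    - intros x _. eapply isd_eq. apply isd_plus. apply isd_mult. apply Hw. apply HdU'.
      apply isd_mult. apply isd_const. apply isd_mult. apply Hw1. apply HdU.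
      unfold g. cbv beta. field. lra.
    - intros x _. apply cont_of_cpt. unfold g. apply cpt_lin; apply cpt_mul; auto. apply cpt_exp; auto. }
  assert (HU1 : U 1 = U 0). { rewrite <- (Hper 0). f_equal. ring. }
  assert (HU'1 : Derive U 1 = Derive U 0).
  { assert (H1 : is_derive (fun x => U (x + 1)) 0 (Derive U (0 + 1) * 1)).
    { apply (isd_eq _ _ (scal 1 (Derive U (0 + 1)))). apply (is_derive_comp U (fun x => x + 1)).
      apply HdU. eapply isd_eq. apply isd_plus. apply isd_id. apply isd_const. ring.
      unfold scal; simpl; unfold mult; simpl. ring. }
    apply is_derive_unique in H1. rewrite (Derive_ext _ U _ Hper) in H1.
    rewrite Rplus_0_l, Rmult_1_r in H1. auto. }
  assert (Hg0 : is_RInt g 0 1 0).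
  { eapply iR_val. exact Hg. rewrite Hw0, Hw10, HU1, HU'1. unfold minus, plus, opp; simpl. ring. }
  clear Hg.
  assert (HL := RInt_is (fun x => w x * U x) 0 1 (fun x => cpt_mul _ _ x (Hcw x) (HcU x))).
  assert (HE := RInt_is (fun x => w x * exp (U x)) 0 1
     (fun x => cpt_mul _ _ x (Hcw x) (cpt_exp _ x (HcU x)))).
  assert (Hg2 := iR_lin _ _ _ _ _ _ (1 / D + mu) (- (K / (I * D))) HL HE).
  assert (Hz0 : (1 / D + mu) * RInt (fun x => w x * U x) 0 1 + - (K / (I * D)) * RInt (fun x => w x * exp (U x)) 0 1 = 0).
  { rewrite <- (is_RInt_unique _ _ _ _ Hg2). exact (is_RInt_unique _ _ _ _ Hg0). }
  unfold LL0, EE0, U0.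
  replace (RInt (fun x => 1 * exp (Gamma_U D n alpha z s x)) 0 1) with I.
  2:{ apply RInt_extR. intros; cbv beta. rewrite Rmult_1_l. reflexivity. }
  fold U. 
  apply (Rmult_eq_reg_r (/ (I * D))). 2: { apply Rinv_neq_0_compat. nra. }
  field_simplify_eq; [|lra].
  field_simplify_eq in Hz0; [|lra]. lra.
Qed.


Lemma cc_pos n : (1 <= n)%nat -> 0 < cc n.
Proof. intros H. unfold cc. apply le_INR in H. simpl in H. pose proof PI_RGT_0. nra. Qed.

Lemma cos_int m n : (1 <= n)%nat -> (1 <= m)%nat ->
  is_RInt (fun x => cos (INR m * cc n * x)) 0 1 0.
Proof. intros Hn Hm.
  assert (Hk : 0 < INR m * cc n).
  { apply Rmult_lt_0_compat. apply le_INR in Hm. simpl in Hm. lra. apply cc_pos; auto. }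
  set (k := INR m * cc n) in *.
  eapply iR_val. apply (is_RInt_derive (V:=R_CompleteNormedModule) (fun x => sin (k * x) * / k)).
  - intros x _. eapply isd_eq. apply isd_mult. apply isd_sin. apply isd_mult. apply isd_const.
    apply isd_id. apply isd_const. cbv beta. field. lra.
  - intros x _. apply cont_of_cpt. apply cpt_of_der. eexists. apply isd_cos. apply isd_mult.
    apply isd_const. apply isd_id.
  - unfold minus, plus, opp; simpl.
    replace (k * 1) with (0 + 2 * INR (m * n) * PI).
    rewrite sin_period. rewrite Rmult_0_r, sin_0. ring.
    unfold k, cc. rewrite mult_INR. ring.
Qed.

Definition Cn n x := cos (cc n * x).

Lemma cos3 t : cos (3 * t) = 4 * cos t ^ 3 - 3 * cos t.
Proof. replace (3 * t) with (2 * t + t) by ring. rewrite cos_plus, sin_2a, cos_2a_cos.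
  pose proof (sin2 t) as H. unfold Rsqr in H.
  replace (2 * sin t * cos t * sin t) with (2 * cos t * (sin t * sin t)) by ring. rewrite H. ring. Qed.
Lemma cos4 t : cos (4 * t) = 8 * cos t ^ 4 - 8 * cos t ^ 2 + 1.
Proof. replace (4 * t) with (2 * (2 * t)) by ring. rewrite cos_2a_cos, cos_2a_cos. ring. Qed.

Lemma INR2 : INR 2 = 2. Proof. simpl; ring. Qed.
Lemma INR3 : INR 3 = 3. Proof. simpl; ring. Qed.
Lemma INR4 : INR 4 = 4. Proof. simpl; ring. Qed.

Lemma one_int : is_RInt (fun _ => 1) 0 1 1.
Proof. apply (iR_val _ _ _ (scal (1 - 0) 1)). apply (is_RInt_const (V:=R_NormedModule)).
  unfold scal; simpl; unfold mult; simpl. ring. Qed.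
Lemma C1_int n : (1 <= n)%nat -> is_RInt (fun x => Cn n x) 0 1 0.
Proof. intros Hn. eapply iR_ext. 2: apply (cos_int 1 n Hn); auto. intros x. simpl. unfold Cn. f_equal. ring. Qed.
Lemma C2_int n : (1 <= n)%nat -> is_RInt (fun x => Cn n x ^ 2) 0 1 (1/2).
Proof. intros Hn.
  assert (H := iR_lin _ _ 0 1 1 0 (1/2) (1/2) one_int (cos_int 2 n Hn ltac:(auto))).
  eapply iR_val. eapply iR_ext. 2: exact H.
  intros x. cbv beta. unfold Cn. rewrite INR2. replace (2 * cc n * x) with (2 * (cc n * x)) by ring.
  rewrite cos_2a_cos. field. field.
Qed.
Lemma C3_int n : (1 <= n)%nat -> is_RInt (fun x => Cn n x ^ 3) 0 1 0.
Proof. intros Hn.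
  assert (H := iR_lin _ _ 0 1 0 0 (3/4) (1/4) (C1_int n Hn) (cos_int 3 n Hn ltac:(auto))).
  eapply iR_val. eapply iR_ext. 2: exact H.
  intros x. cbv beta. unfold Cn. rewrite INR3. replace (3 * cc n * x) with (3 * (cc n * x)) by ring.
  rewrite cos3. field. field.
Qed.
Lemma C4_int n : (1 <= n)%nat -> is_RInt (fun x => Cn n x ^ 4) 0 1 (3/8).
Proof. intros Hn.
  assert (H1 := iR_lin _ _ 0 1 1 0 (3/8) (1/2) one_int (cos_int 2 n Hn ltac:(auto))).
  assert (H := iR_lin _ _ 0 1 _ 0 1 (1/8) H1 (cos_int 4 n Hn ltac:(auto))).
  eapply iR_val. eapply iR_ext. 2: exact H.
  intros x. cbv beta. unfold Cn. rewrite INR2, INR4. replace (4 * cc n * x) with (4 * (cc n * x)) by ring.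
  replace (2 * cc n * x) with (2 * (cc n * x)) by ring.
  rewrite cos4, cos_2a_cos. field. field.
Qed.

Lemma Cn_cont n x : continuity_pt (Cn n) x.
Proof. apply cpt_of_der. eexists. unfold Cn. apply isd_cos. apply isd_mult. apply isd_const. apply isd_id. Qed.

Lemma master n (Y Z : R -> R) p0 p1 p2 p3 p4 q1 q2 q3 q4 :
  (1 <= n)%nat -> (forall x, continuity_pt Y x) -> (forall x, continuity_pt Z x) ->
  is_RInt (fun x => p0 + p1 * Cn n x + p2 * Cn n x ^ 2 + p3 * Cn n x ^ 3 + p4 * Cn n x ^ 4
     + q1 * Y x + q2 * (Cn n x ^ 2 * Y x) + q3 * (Cn n x * Y x) + q4 * (Cn n x * Z x)) 0 1
   (p0 + p2 * (1/2) + p4 * (3/8) + q1 * RInt Y 0 1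
    + q2 * RInt (fun x => Cn n x ^ 2 * Y x) 0 1 + q3 * RInt (fun x => Cn n x * Y x) 0 1
    + q4 * RInt (fun x => Cn n x * Z x) 0 1).
Proof. intros Hn HY HZ.
  assert (HC := Cn_cont n).
  assert (H1 := iR_lin _ _ 0 1 _ _ p0 p1 one_int (C1_int n Hn)).
  assert (H2 := iR_lin _ _ 0 1 _ _ 1 p2 H1 (C2_int n Hn)).
  assert (H3 := iR_lin _ _ 0 1 _ _ 1 p3 H2 (C3_int n Hn)).
  assert (H4 := iR_lin _ _ 0 1 _ _ 1 p4 H3 (C4_int n Hn)).
  assert (H5 := iR_lin _ _ 0 1 _ _ 1 q1 H4 (RInt_is Y 0 1 HY)).
  assert (H6 := iR_lin _ _ 0 1 _ _ 1 q2 H5 (RInt_is (fun x => Cn n x ^ 2 * Y x) 0 1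
     (fun x => cpt_mul _ _ x (cpt_mul _ _ x (HC x) (cpt_mul _ _ x (HC x) (continuity_pt_const (fun _ => 1) x (fun _ _ => eq_refl)))) (HY x)))).
  assert (H7 := iR_lin _ _ 0 1 _ _ 1 q3 H6 (RInt_is (fun x => Cn n x * Y x) 0 1
     (fun x => cpt_mul _ _ x (HC x) (HY x)))).
  assert (H8 := iR_lin _ _ 0 1 _ _ 1 q4 H7 (RInt_is (fun x => Cn n x * Z x) 0 1
     (fun x => cpt_mul _ _ x (HC x) (HZ x)))).
  eapply iR_val. eapply iR_ext. 2: exact H8.
  intros x. cbv beta. ring. ring.
Qed.


Lemma val_lemma n (Y Z f : R -> R) p0 p1 p2 p3 p4 q1 q2 q3 q4 :
  (1 <= n)%nat -> (forall x, continuity_pt Y x) -> (forall x, continuity_pt Z x) ->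
  (forall x, f x = p0 + p1 * Cn n x + p2 * Cn n x ^ 2 + p3 * Cn n x ^ 3 + p4 * Cn n x ^ 4
     + q1 * Y x + q2 * (Cn n x ^ 2 * Y x) + q3 * (Cn n x * Y x) + q4 * (Cn n x * Z x)) ->
  RInt f 0 1 =
   (p0 + p2 * (1/2) + p4 * (3/8) + q1 * RInt Y 0 1
    + q2 * RInt (fun x => Cn n x ^ 2 * Y x) 0 1 + q3 * RInt (fun x => Cn n x * Y x) 0 1
    + q4 * RInt (fun x => Cn n x * Z x) 0 1).
Proof. intros Hn HY HZ Hf. apply is_RInt_unique. eapply iR_ext. 2: apply (master n Y Z); auto.
  intros x; symmetry; apply Hf. Qed.

Definition AA z : R := RInt (Dz z 1 0) 0 1.
Definition A2 n z : R := RInt (fun x => Cn n x ^ 2 * Dz z 1 0 x) 0 1.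
Definition A3 n z : R := RInt (fun x => Cn n x * Dz z 1 0 x) 0 1.
Definition A4 n z : R := RInt (fun x => Cn n x * Dz z 2 0 x) 0 1.
Definition psi n x := cos (cc (2 * n) * x).
Definition wone (x : R) := 1.

Ltac unbr H := destruct H as [Hdel [Ha [Ha0 [Hda0 [Hz [Hz0 [Hzp Hst]]]]]]].

Lemma U0_at0 D n delta alpha z x : is_branch D n delta alpha z -> U0 D n alpha z 0 x = kappa D n.
Proof. intros H; unbr H. unfold U0, Gamma_U. rewrite Ha0, Hz0. ring. Qed.
Lemma U1_at0 D n delta alpha z x : is_branch D n delta alpha z -> U1 n alpha z 0 x = sqrt 2 * Cn n x.
Proof. intros H; unbr H. unfold U1. change (Da alpha 1 0) with (Derive alpha 0). rewrite Hda0, Hz0.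
  unfold phi, Cn. ring. Qed.
Lemma U2_at0 (alpha : R -> R) z x : U2 alpha z 0 x = Da alpha 2 0 + 2 * Dz z 1 0 x.
Proof. unfold U2. ring. Qed.
Lemma U3_at0 (alpha : R -> R) z x : U3 alpha z 0 x = Da alpha 3 0 + 3 * Dz z 2 0 x.
Proof. unfold U3. ring. Qed.
Lemma psi_C n x : psi n x = 2 * Cn n x ^ 2 - 1.
Proof. unfold psi, Cn, cc. rewrite mult_INR. replace (2 * (INR 2 * INR n) * PI * x) with (2 * (2 * INR n * PI * x)).
  rewrite cos_2a_cos. ring. simpl. ring. Qed.

Lemma Y_cont D n delta alpha z k x : is_branch D n delta alpha z -> continuity_pt (Dz z k 0) x.
Proof. intros H; unbr H. apply continuity_pt_filterlim. apply c2_cont_x.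
  apply (Dz_cont delta z k 0 x Hz). rewrite Rabs_R0. lra. Qed.

Lemma sq2 : sqrt 2 ^ 2 = 2.
Proof. simpl; rewrite Rmult_1_r; apply sqrt_sqrt; lra. Qed.
Lemma sq4 : sqrt 2 ^ 4 = 4.
Proof. replace (sqrt 2 ^ 4) with (sqrt 2 ^ 2 * sqrt 2 ^ 2) by ring; rewrite sq2; ring. Qed.
Lemma sq3 : sqrt 2 ^ 3 = 2 * sqrt 2.
Proof. replace (sqrt 2 ^ 3) with (sqrt 2 ^ 2 * sqrt 2) by ring; rewrite sq2; ring. Qed.
Ltac rsimp := ring_simplify; rewrite ?sq4, ?sq3, ?sq2; field.

Ltac valt D n delta alpha z Hb p0 p1 p2 p3 p4 q1 q2 q3 q4 :=
  rewrite (val_lemma n (Dz z 1 0) (Dz z 2 0) _ p0 p1 p2 p3 p4 q1 q2 q3 q4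
     ltac:(auto) (fun x => Y_cont D n delta alpha z 1 x Hb) (fun x => Y_cont D n delta alpha z 2 x Hb));
  [ fold (AA z) (A2 n z) (A3 n z) (A4 n z); rsimp
  | intros x; cbv beta; rewrite ?(U0_at0 D n delta alpha z x Hb), ?(U1_at0 D n delta alpha z x Hb),
      ?U2_at0, ?U3_at0, ?psi_C; unfold wone, phi, Cn; ring ].

Section V. End V.
Lemma vals D n delta alpha z : (1 <= n)%nat -> is_branch D n delta alpha z ->
  let e := exp (kappa D n) in let k := kappa D n in
  let a := Da alpha 2 0 in let b := Da alpha 3 0 in
  EE0 D n alpha z wone 0 = e /\
  EE1 D n alpha z wone 0 = 0 /\
  EE2 D n alpha z wone 0 = e * a + e + 2 * e * AA z /\
  LL0 D n alpha z (phi n) 0 = 0 /\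
  LL1 n alpha z (phi n) 0 = 1 /\
  LL2 alpha z (phi n) 0 = 2 * sqrt 2 * A3 n z /\
  LL3 alpha z (phi n) 0 = 3 * sqrt 2 * A4 n z /\
  EE0 D n alpha z (phi n) 0 = 0 /\
  EE1 D n alpha z (phi n) 0 = e /\
  EE2 D n alpha z (phi n) 0 = 2 * e * sqrt 2 * A3 n z /\
  EE3 D n alpha z (phi n) 0 = 3 * e * a + 3 * e / 2 + 12 * e * A2 n z + 3 * e * sqrt 2 * A4 n z /\
  LL0 D n alpha z (psi n) 0 = 0 /\
  LL1 n alpha z (psi n) 0 = 0 /\
  LL2 alpha z (psi n) 0 = 4 * A2 n z - 2 * AA z /\
  EE0 D n alpha z (psi n) 0 = 0 /\
  EE1 D n alpha z (psi n) 0 = 0 /\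
  EE2 D n alpha z (psi n) 0 = e / 2 + 4 * e * A2 n z - 2 * e * AA z.
Proof.
  intros Hn Hb e k a b. subst e k a b.
  repeat split; unfold EE0, EE1, EE2, EE3, LL0, LL1, LL2, LL3.
  - valt D n delta alpha z Hb (exp (kappa D n)) 0 0 0 0 0 0 0 0.
  - valt D n delta alpha z Hb 0 ((exp (kappa D n)) * sqrt 2) 0 0 0 0 0 0 0.
  - valt D n delta alpha z Hb ((exp (kappa D n)) * (Da alpha 2 0)) 0 ((exp (kappa D n)) * sqrt 2 ^ 2) 0 0 (2 * (exp (kappa D n))) 0 0 0.
  - valt D n delta alpha z Hb 0 (sqrt 2 * (kappa D n)) 0 0 0 0 0 0 0.
  - valt D n delta alpha z Hb 0 0 (sqrt 2 ^ 2) 0 0 0 0 0 0.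
  - valt D n delta alpha z Hb 0 (sqrt 2 * (Da alpha 2 0)) 0 0 0 0 0 (2 * sqrt 2) 0.
  - valt D n delta alpha z Hb 0 (sqrt 2 * (Da alpha 3 0)) 0 0 0 0 0 0 (3 * sqrt 2).
  - valt D n delta alpha z Hb 0 (sqrt 2 * (exp (kappa D n))) 0 0 0 0 0 0 0.
  - valt D n delta alpha z Hb 0 0 ((exp (kappa D n)) * sqrt 2 ^ 2) 0 0 0 0 0 0.
  - valt D n delta alpha z Hb 0 ((exp (kappa D n)) * sqrt 2 * (Da alpha 2 0)) 0 ((exp (kappa D n)) * sqrt 2 ^ 3) 0 0 0 (2 * (exp (kappa D n)) * sqrt 2) 0.
  - valt D n delta alpha z Hb 0 ((exp (kappa D n)) * sqrt 2 * (Da alpha 3 0)) (3 * (exp (kappa D n)) * sqrt 2 ^ 2 * (Da alpha 2 0)) 0 ((exp (kappa D n)) * sqrt 2 ^ 4) 0 (6 * (exp (kappa D n)) * sqrt 2 ^ 2) 0 (3 * (exp (kappa D n)) * sqrt 2).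
  - valt D n delta alpha z Hb (- (kappa D n)) 0 (2 * (kappa D n)) 0 0 0 0 0 0.
  - valt D n delta alpha z Hb 0 (- sqrt 2) 0 (2 * sqrt 2) 0 0 0 0 0.
  - valt D n delta alpha z Hb (- (Da alpha 2 0)) 0 (2 * (Da alpha 2 0)) 0 0 (-2) 4 0 0.
  - valt D n delta alpha z Hb (- (exp (kappa D n))) 0 (2 * (exp (kappa D n))) 0 0 0 0 0 0.
  - valt D n delta alpha z Hb 0 (- (exp (kappa D n)) * sqrt 2) 0 (2 * (exp (kappa D n)) * sqrt 2) 0 0 0 0 0.
  - valt D n delta alpha z Hb (- (exp (kappa D n)) * (Da alpha 2 0)) 0 (2 * (exp (kappa D n)) * (Da alpha 2 0) - (exp (kappa D n)) * sqrt 2 ^ 2) 0 (2 * (exp (kappa D n)) * sqrt 2 ^ 2) (-2 * (exp (kappa D n))) (4 * (exp (kappa D n))) 0 0.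
Qed.


Definition chain3 delta (f f1 f2 f3 : R -> R) := forall s, Rabs s < delta ->
  is_derive f s (f1 s) /\ is_derive f1 s (f2 s) /\ is_derive f2 s (f3 s).

Lemma der_zero (G : R -> R) delta s0 l : Rabs s0 < delta ->
  (forall s, Rabs s < delta -> G s = 0) -> is_derive G s0 l -> l = 0.
Proof. intros Hs HG Hd. apply is_derive_unique in Hd. rewrite <- Hd.
  rewrite (Derive_ext_loc G (fun _ => 0)). apply Derive_const.
  assert (Hp : 0 < delta - Rabs s0) by lra.
  exists (mkposreal _ Hp). intros y Hy. apply HG. apply ball_abs in Hy. simpl in Hy.
  pose proof (Rabs_triang_inv y s0). lra. Qed.

Ltac dtac := repeat first [ eassumption | apply isd_const | apply isd_plus | apply isd_mult ].

Lemma prod_id delta (f f1 f2 f3 g g1 g2 g3 h h1 h2 h3 k k1 k2 k3 : R -> R) :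
  0 < delta -> chain3 delta f f1 f2 f3 -> chain3 delta g g1 g2 g3 ->
  chain3 delta h h1 h2 h3 -> chain3 delta k k1 k2 k3 ->
  (forall s, Rabs s < delta -> f s * g s - h s * k s = 0) ->
  f2 0 * g 0 + 2 * f1 0 * g1 0 + f 0 * g2 0 - (h2 0 * k 0 + 2 * h1 0 * k1 0 + h 0 * k2 0) = 0 /\
  f3 0 * g 0 + 3 * f2 0 * g1 0 + 3 * f1 0 * g2 0 + f 0 * g3 0
   - (h3 0 * k 0 + 3 * h2 0 * k1 0 + 3 * h1 0 * k2 0 + h 0 * k3 0) = 0.
Proof. intros Hd Cf Cg Ch Ck H0.
  assert (H1 : forall s, Rabs s < delta ->
     f1 s * g s + f s * g1 s + (-1) * (h1 s * k s + h s * k1 s) = 0).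
  { intros s Hs. apply (der_zero (fun s => f s * g s + (-1) * (h s * k s)) delta s); auto.
    intros u Hu. rewrite <- (H0 u Hu). ring.
    destruct (Cf s Hs) as [F1 [F2 F3]]; destruct (Cg s Hs) as [G1 [G2 G3]];
    destruct (Ch s Hs) as [K1 [K2 K3]]; destruct (Ck s Hs) as [L1 [L2 L3]].
    eapply isd_eq. apply isd_plus. apply isd_mult; [exact F1 | exact G1].
    apply isd_mult. apply isd_const. apply isd_mult; [exact K1 | exact L1].
    cbv beta. ring. }
  assert (H2 : forall s, Rabs s < delta ->
     f2 s * g s + 2 * (f1 s * g1 s) + f s * g2 s + (-1) * (h2 s * k s + 2 * (h1 s * k1 s) + h s * k2 s) = 0).
  { intros s Hs. apply (der_zero (fun s => f1 s * g s + f s * g1 s + (-1) * (h1 s * k s + h s * k1 s)) delta s); auto.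
    destruct (Cf s Hs) as [F1 [F2 F3]]; destruct (Cg s Hs) as [G1 [G2 G3]];
    destruct (Ch s Hs) as [K1 [K2 K3]]; destruct (Ck s Hs) as [L1 [L2 L3]].
    eapply isd_eq. apply isd_plus. apply isd_plus.
    apply isd_mult; [exact F2 | exact G1]. apply isd_mult; [exact F1 | exact G2].
    apply isd_mult. apply isd_const. apply isd_plus.
    apply isd_mult; [exact K2 | exact L1]. apply isd_mult; [exact K1 | exact L2].
    cbv beta. ring. }
  assert (Hz : Rabs 0 < delta) by (rewrite Rabs_R0; lra).
  split.
  - specialize (H2 0 Hz). lra.
  - assert (E := der_zero (fun s => f2 s * g s + 2 * (f1 s * g1 s) + f s * g2 s + (-1) * (h2 s * k s + 2 * (h1 s * k1 s) + h s * k2 s)) delta 0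
       (f3 0 * g 0 + 3 * f2 0 * g1 0 + 3 * f1 0 * g2 0 + f 0 * g3 0
   - (h3 0 * k 0 + 3 * h2 0 * k1 0 + 3 * h1 0 * k2 0 + h 0 * k3 0)) Hz H2).
    apply E.
    destruct (Cf 0 Hz) as [F1 [F2 F3]]; destruct (Cg 0 Hz) as [G1 [G2 G3]];
    destruct (Ch 0 Hz) as [K1 [K2 K3]]; destruct (Ck 0 Hz) as [L1 [L2 L3]].
    eapply isd_eq. apply isd_plus. apply isd_plus. apply isd_plus.
    apply isd_mult; [exact F3 | exact G1].
    apply isd_mult. apply isd_const. apply isd_mult; [exact F2 | exact G2].
    apply isd_mult; [exact F1 | exact G3].
    apply isd_mult. apply isd_const. apply isd_plus. apply isd_plus.
    apply isd_mult; [exact K3 | exact L1].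
    apply isd_mult. apply isd_const. apply isd_mult; [exact K2 | exact L2].
    apply isd_mult; [exact K1 | exact L3].
    cbv beta. ring.
Qed.


Lemma cc_per m : cos (cc m * 1) = cos (cc m * 0) /\ sin (cc m * 1) = sin (cc m * 0).
Proof. replace (cc m * 1) with (0 + 2 * INR m * PI) by (unfold cc; ring).
  rewrite Rmult_0_r, cos_period, sin_period. split; reflexivity. Qed.

Lemma wcos_der m x : is_derive (fun x => cos (cc m * x)) x (- cc m * sin (cc m * x)).
Proof. eapply isd_eq. apply isd_cos. apply isd_mult. apply isd_const. apply isd_id. cbv beta; ring. Qed.
Lemma wsin_der m A x : is_derive (fun x => A * sin (cc m * x)) x (A * cc m * cos (cc m * x)).
Proof. eapply isd_eq. apply isd_mult. apply isd_const. apply isd_sin. apply isd_mult. apply isd_const. apply isd_id. cbv beta; ring. Qed.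

Lemma ident_phi D n alpha z delta s : 0 < D -> smooth_on2 delta z -> Rabs s < delta ->
  stationary_solution D (kappa D n + alpha s) (Gamma_U D n alpha z s) ->
  kappa D n * LL0 D n alpha z (phi n) s * EE0 D n alpha z wone s
  - (kappa D n + alpha s) * EE0 D n alpha z (phi n) s = 0.
Proof. intros HD Hz Hs Hst.
  assert (H := ident (phi n) (fun x => (- sqrt 2 * cc n) * sin (cc n * x)) (cc n ^ 2) D n alpha z delta s HD Hz Hs Hst).
  replace (1 + D * cc n ^ 2) with (kappa D n) in H by (unfold kappa, cc; ring).
  change (fun _ : R => 1) with wone in H. rewrite H. ring.
  apply phi_der. intros x. eapply isd_eq. apply wsin_der. unfold phi. ring.
  unfold phi; rewrite (proj1 (cc_per n)); reflexivity.
  rewrite (proj2 (cc_per n)); reflexivity.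
Qed.
Lemma ident_psi D n alpha z delta s : 0 < D -> smooth_on2 delta z -> Rabs s < delta ->
  stationary_solution D (kappa D n + alpha s) (Gamma_U D n alpha z s) ->
  (4 * kappa D n - 3) * LL0 D n alpha z (psi n) s * EE0 D n alpha z wone s
  - (kappa D n + alpha s) * EE0 D n alpha z (psi n) s = 0.
Proof. intros HD Hz Hs Hst.
  assert (H := ident (psi n) (fun x => (- cc (2 * n)) * sin (cc (2 * n) * x)) (cc (2 * n) ^ 2) D n alpha z delta s HD Hz Hs Hst).
  replace (1 + D * cc (2 * n) ^ 2) with (4 * kappa D n - 3) in H
    by (unfold kappa, cc; rewrite mult_INR; simpl; ring).
  change (fun _ : R => 1) with wone in H. rewrite H. ring.
  apply wcos_der. intros x. eapply isd_eq. apply wsin_der. unfold psi. ring.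
  unfold psi; rewrite (proj1 (cc_per (2 * n))); reflexivity.
  rewrite (proj2 (cc_per (2 * n))); reflexivity.
Qed.

Lemma wcont_phi n x : continuity_pt (phi n) x. Proof. apply phi_cont. Qed.
Lemma wcont_psi n x : continuity_pt (psi n) x. Proof. apply cpt_of_der. eexists. apply wcos_der. Qed.
Lemma wcont_one x : continuity_pt wone x.
Proof. apply cpt_of_der. eexists. apply (isd_const 1 x). Qed.

Lemma chainE D n alpha z delta w : smooth_on1 delta alpha -> smooth_on2 delta z ->
  (forall x, continuity_pt w x) ->
  chain3 delta (EE0 D n alpha z w) (EE1 D n alpha z w) (EE2 D n alpha z w) (EE3 D n alpha z w).
Proof. intros Ha Hz Hw s Hs. split; [|split].
  apply (EE0_der D n alpha z delta w s); auto. apply (EE1_der D n alpha z delta w s); auto. apply (EE2_der D n alpha z delta w s); auto. Qed.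
Lemma chainL D n alpha z delta w c : smooth_on1 delta alpha -> smooth_on2 delta z ->
  (forall x, continuity_pt w x) ->
  chain3 delta (fun s => c * LL0 D n alpha z w s) (fun s => c * LL1 n alpha z w s)
     (fun s => c * LL2 alpha z w s) (fun s => c * LL3 alpha z w s).
Proof. intros Ha Hz Hw s Hs. split; [|split].
  eapply isd_eq. apply isd_mult. apply isd_const. apply (LL0_der D n alpha z delta w s); auto. cbv beta; ring.
  eapply isd_eq. apply isd_mult. apply isd_const. apply (LL1_der n alpha z delta w s); auto. cbv beta; ring.
  eapply isd_eq. apply isd_mult. apply isd_const. apply (LL2_der alpha z delta w s); auto. cbv beta; ring.
Qed.
Lemma chainK D n (alpha : R -> R) delta : smooth_on1 delta alpha ->
  chain3 delta (fun s => kappa D n + alpha s) (Da alpha 1) (Da alpha 2) (Da alpha 3).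
Proof. intros Ha s Hs. split; [|split].
  eapply isd_eq. apply isd_plus. apply isd_const. apply (Da_der delta alpha 0 s Ha Hs). ring.
  apply (Da_der delta alpha 1 s Ha Hs). apply (Da_der delta alpha 2 s Ha Hs). Qed.

Lemma alpha_formula D n delta alpha z : 0 < D -> (1 <= n)%nat -> is_branch D n delta alpha z ->
  Da alpha 2 0 * (6 * (kappa D n - 1)) = kappa D n * (2 * kappa D n - 3).
Proof. intros HD Hn Hb.
  destruct (vals D n delta alpha z Hn Hb) as
    [V1 [V2 [V3 [V4 [V5 [V6 [V7 [V8 [V9 [V10 [V11 [V12 [V13 [V14 [V15 [V16 V17]]]]]]]]]]]]]]]].
  assert (Hb' := Hb). unbr Hb'.
  assert (P1 := prod_id delta _ _ _ _ _ _ _ _ _ _ _ _ _ _ _ _ Hdel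
     (chainL D n alpha z delta (phi n) (kappa D n) Ha Hz (wcont_phi n))
     (chainE D n alpha z delta wone Ha Hz wcont_one)
     (chainK D n alpha delta Ha)
     (chainE D n alpha z delta (phi n) Ha Hz (wcont_phi n))
     (fun s Hs => ident_phi D n alpha z delta s HD Hz Hs (Hst s Hs))).
  assert (P2 := prod_id delta _ _ _ _ _ _ _ _ _ _ _ _ _ _ _ _ Hdel
     (chainL D n alpha z delta (psi n) (4 * kappa D n - 3) Ha Hz (wcont_psi n))
     (chainE D n alpha z delta wone Ha Hz wcont_one)
     (chainK D n alpha delta Ha)
     (chainE D n alpha z delta (psi n) Ha Hz (wcont_psi n))
     (fun s Hs => ident_psi D n alpha z delta s HD Hz Hs (Hst s Hs))).
  destruct P1 as [_ P1]. destruct P2 as [P2 _].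
  change (Da alpha 1 0) with (Derive alpha 0) in P1, P2. rewrite Hda0, Ha0 in P1, P2.
  rewrite V1, V2, V3, V4, V5, V6, V7, V8, V9, V10, V11 in P1.
  rewrite V1, V2, V12, V13, V14, V15, V16, V17 in P2.
  set (e := exp (kappa D n)) in *. assert (He : 0 < e) by apply exp_pos.
  set (k := kappa D n) in *. set (a := Da alpha 2 0) in *.
  set (X := 4 * A2 n z - 2 * AA z).
  assert (E1 : a = k / 2 - k * X).
  { apply (Rmult_eq_reg_l (3 * e)); [|lra]. unfold X. 
    lra. }
  assert (E2 : (3 * k - 3) * X = k / 2).
  { apply (Rmult_eq_reg_l e); [|lra]. unfold X.
    lra. }
  rewrite E1.
  replace ((k / 2 - k * X) * (6 * (k - 1))) with (3 * k * (k - 1) - 2 * k * ((3 * k - 3) * X)) by field.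
  rewrite E2. field.
Qed.


Lemma sign_lemma (f f1 : R -> R) delta a : 0 < delta -> f 0 = 0 -> f1 0 = 0 ->
  (forall s, Rabs s < delta -> is_derive f s (f1 s)) -> is_derive f1 0 a -> a < 0 ->
  exists eps, 0 < eps /\ forall s, 0 < Rabs s < eps -> f s < 0.
Proof. intros Hd Hf0 Hf10 Hder Hd1 Ha.
  apply is_derive_Reals in Hd1.
  assert (Hp : 0 < - a / 2) by lra.
  destruct (Hd1 (- a / 2) Hp) as [d' Hd'].
  exists (Rmin d' delta). split. apply Rmin_pos; [apply cond_pos | lra].
  intros s [Hs1 Hs2].
  assert (Hsd : Rabs s < delta) by (eapply Rlt_le_trans; [exact Hs2 | apply Rmin_r]).
  assert (Hsd' : Rabs s < d') by (eapply Rlt_le_trans; [exact Hs2 | apply Rmin_l]).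
  assert (Hq : forall c, c <> 0 -> Rabs c <= Rabs s -> f1 c / c < a / 2).
  { intros c Hc Hcs. assert (Hc' : Rabs c < d') by lra.
    specialize (Hd' c Hc Hc'). rewrite Rplus_0_l, Hf10 in Hd'.
    replace ((f1 c - 0) / c) with (f1 c / c) in Hd' by (unfold Rdiv; ring).
    apply Rabs_def2 in Hd'. lra. }
  assert (Hdl : forall c, Rabs c <= Rabs s -> derivable_pt_lim f c (f1 c)).
  { intros c Hc. apply is_derive_Reals. apply Hder. lra. }
  destruct (Rlt_or_le 0 s) as [Hpos | Hneg].
  - destruct (MVT_cor2 f f1 0 s Hpos) as [c [Hc1 Hc2]].
    { intros c Hc. apply Hdl. rewrite (Rabs_right s) by lra. rewrite Rabs_right by lra. lra. }
    assert (Hcq := Hq c ltac:(lra) ltac:(rewrite (Rabs_right s) by lra; rewrite Rabs_right by lra; lra)).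
    assert (Hf1c : f1 c < 0).
    { replace (f1 c) with (f1 c / c * c) by (field; lra). nra. }
    rewrite Hf0 in Hc1. nra.
  - assert (Hsn : s < 0). { destruct (Req_dec s 0) as [->|]; [rewrite Rabs_R0 in Hs1; lra | lra]. }
    destruct (MVT_cor2 f f1 s 0 Hsn) as [c [Hc1 Hc2]].
    { intros c Hc. apply Hdl. rewrite (Rabs_left s) by lra. 
      destruct (Req_dec c 0) as [->|]. rewrite Rabs_R0; lra. rewrite Rabs_left by lra. lra. }
    assert (Hcq := Hq c ltac:(lra) ltac:(rewrite (Rabs_left s) by lra; rewrite Rabs_left by lra; lra)).
    assert (Hf1c : f1 c > 0).
    { replace (f1 c) with (f1 c / c * c) by (field; lra). nra. }
    rewrite Hf0 in Hc1. nra.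
Qed.


Theorem mainTheorem14 (D : R) (n : nat) (delta : R)
    (alpha : R -> R) (z : R -> R -> R) :
  0 < D -> (1 <= n)%nat ->
  is_branch D n delta alpha z ->
  kappa D n <> 3 / 2 ->
  pitchfork alpha /\
  (kappa D n < 3 / 2 <-> Derive_n alpha 2 0 < 0) /\
  (kappa D n > 3 / 2 <-> Derive_n alpha 2 0 > 0) /\
  (Derive_n alpha 2 0 < 0 -> subcritical alpha) /\
  (Derive_n alpha 2 0 > 0 -> supercritical alpha) /\
  (kappa D n < 3 / 2 <-> D < / (8 * (INR n) ^ 2 * PI ^ 2)) /\
  (kappa D n > 3 / 2 <-> D > / (8 * (INR n) ^ 2 * PI ^ 2)).
Proof.
  intros HD Hn Hb Hk.
  assert (Haf := alpha_formula D n delta alpha z HD Hn Hb).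
  assert (Hb' := Hb). unbr Hb'.
  unfold pitchfork, subcritical, supercritical.
  change (Derive_n alpha 2 0) with (Da alpha 2 0).
  assert (HN : 1 <= INR n) by (apply le_INR in Hn; simpl in Hn; lra).
  assert (HP := PI_RGT_0).
  assert (Hq : 0 < 8 * INR n ^ 2 * PI ^ 2) by (apply Rmult_lt_0_compat; [apply Rmult_lt_0_compat; [lra|] |]; apply pow_lt; lra).
  assert (Hk1 : 1 < kappa D n) by (unfold kappa; simpl; nra).
  assert (Hr0 : Rabs 0 < delta) by (rewrite Rabs_R0; lra).
  assert (Hder : forall s, Rabs s < delta -> is_derive alpha s (Derive alpha s))
    by (intros s Hs; exact (Da_der delta alpha 0 s Ha Hs)).
  assert (Hder2 : is_derive (Derive alpha) 0 (Da alpha 2 0)) by exact (Da_der delta alpha 1 0 Ha Hr0).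
  set (a := Da alpha 2 0) in *. set (k := kappa D n) in *.
  set (q := 8 * INR n ^ 2 * PI ^ 2) in *.
  assert (Hkq : k = 1 + q * D / 2) by (unfold k, q, kappa; field).
  assert (Hiq : q * / q = 1) by (field; lra).
  set (iq := / q) in *.
  split; [|split; [|split; [|split; [|split; [|split]]]]].
  - intros Ha2. rewrite Ha2 in Haf. apply Hk. nra.
  - split; intros H; nra.
  - split; intros H; nra.
  - intros Hneg. apply (sign_lemma alpha (Derive alpha) delta a); auto.
  - intros Hpos. destruct (sign_lemma (fun s => -1 * alpha s) (fun s => -1 * Derive alpha s) delta (-1 * a))
      as [eps [He Hs]]; auto.
    + rewrite Ha0; ring.
    + rewrite Hda0; ring.
    + intros s Hs. eapply isd_eq. apply isd_mult. apply isd_const. apply Hder. exact Hs. cbv beta; ring.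
    + eapply isd_eq. apply isd_mult. apply isd_const. exact Hder2. cbv beta; ring.
    + lra.
    + exists eps. split; auto. intros s Hs'. specialize (Hs s Hs'). cbv beta in Hs. lra.
  - rewrite Hkq. split; intros H; nra.
  - rewrite Hkq. split; intros H; nra.
Qed.
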